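(* Let $R$ be a Noetherian ring, $F$ a coherent functor, $M$ a finitely generated $R$-module, $M'\subseteq M$ a submodule, $I$ an ideal of $R$, $S=\bigoplus_{n\ge0}I^n$ the Rees algebra and $\operatorname{gr}(I)=\bigoplus_{n\ge0}I^n/I^{n+1}$. Extend $F$ to all $R$-modules as described in the context. Then: (a) $F\big(\bigoplus_{n\ge0}I^nM/I^nM'\big)=\bigoplus_{n\ge0}F(I^nM/I^nM')$ is a finitely generated graded $S$-module; (b) when $M'=IM$, $F\big(\bigoplus_{n\ge0}I^nM/I^{n+1}M\big)=\bigoplus_{n\ge0}F(I^nM/I^{n+1}M)$ is a finitely generated graded $\operatorname{gr}(I)$-module; (c) in (a) and (b), the module structures are the ones in which an element $x\in I^m$ acts on the degree-$n$ component via $F$ applied to the multiplication map $I^nM/I^nM'\xrightarrow{x}I^{n+m}M/I^{n+m}M'$.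
   Context: For an $R$-module $X$, $h_X=\operatorname{Hom}_R(X,-)$. A coherent functor is an $R$-linear covariant functor $F$ from finitely generated $R$-modules to finitely generated $R$-modules admitting an exact sequence $h_L\to h_K\to F\to 0$ with $K,L$ finitely generated; the map $h_L\to h_K$ is induced by a homomorphism $K\to L$, and $F$ extends to all $R$-modules by setting $F(X)=\operatorname{coker}(\operatorname{Hom}_R(L,X)\to\operatorname{Hom}_R(K,X))$. *)

(* Defs.v *)
From HB Require Import structures.
From mathcomp Require Import all_boot all_algebra.
From Stdlib Require List.
Set Implicit Arguments. Unset Strict Implicit. Unset Printing Implicit Defensive.
Import GRing.Theory.
Local Open Scope ring_scope.

Section Defs.
Variable R : comPzRingType.

Definition is_ideal (I : R -> Prop) : Prop :=
  I 0 /\ (forall x y, I x -> I y -> I (x + y)) /\ (forall r x, I x -> I (r * x)).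

Fixpoint ipow (I : R -> Prop) (n : nat) : R -> Prop :=
  match n with
  | 0 => fun _ => True
  | n'.+1 => fun x => exists rs : seq (R * R),
      (forall p, p \in rs -> ipow I n' p.1 /\ I p.2) /\
      x = \sum_(p <- rs) p.1 * p.2
  end.

Definition noetherian : Prop :=
  forall I : R -> Prop, is_ideal I ->
    exists gs : seq R, forall x,
      I x <-> exists cs : seq R, x = \sum_(p <- zip cs gs) p.1 * p.2.

Definition fg_mod (M : lmodType R) : Prop :=
  exists gs : seq M, forall x : M,
    exists cs : seq R, x = \sum_(p <- zip cs gs) p.1 *: p.2.

Definition is_submod (M : lmodType R) (N : M -> Prop) : Prop :=
  N 0 /\ (forall x y, N x -> N y -> N (x + y)) /\ (forall r x, N x -> N (r *: x)).

Definition prod_span (M : lmodType R) (A : R -> Prop) (N : M -> Prop) : M -> Prop :=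
  fun x => exists rs : seq (R * M),
    (forall p, p \in rs -> A p.1 /\ N p.2) /\ x = \sum_(p <- rs) p.1 *: p.2.

Definition IpowM (M : lmodType R) (I : R -> Prop) (N : M -> Prop) (n : nat) : M -> Prop :=
  prod_span (ipow I n) N.

(** The coherent functor F given by a presentation  h_L -> h_K -> F -> 0,
    induced by f : K -> L, evaluated on a subquotient module.
    We treat a family (indexed by J) of subquotients P j / Q j of an ambient
    module M, whose direct sum  (+)_j P j / Q j  is the module X of interest.
    A homomorphism K -> X is represented by  phi : K -> J -> M  with
    phi k j in P j, each phi k finitely supported, and phi linear modulo Q.
    (Every homomorphism K -> X has such a lift, by choice.) *)
Definition fin_supp (J : eqType) (M : lmodType R) (s : J -> M) : Prop :=
  exists js : seq J, forall j, j \notin js -> s j = 0.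

Definition is_hom_sq (K M : lmodType R) (J : eqType) (P Q : J -> M -> Prop)
    (phi : K -> J -> M) : Prop :=
  (forall k j, P j (phi k j)) /\ (forall k, fin_supp (phi k)) /\
  (forall a k1 k2 j, Q j (phi (a *: k1 + k2) j - (a *: phi k1 j + phi k2 j))).

(* Two homs K -> X (equal modulo Q) define the same element of
   F(X) = coker(Hom(L,X) -> Hom(K,X)) iff their difference is  psi o f
   for a hom psi : L -> X. *)
Definition F_rel (K L M : lmodType R) (f : K -> L) (J : eqType) (P Q : J -> M -> Prop)
    (phi phi' : K -> J -> M) : Prop :=
  exists psi : L -> J -> M, is_hom_sq P Q psi /\
    forall k j, Q j (phi k j - phi' k j - psi (f k) j).

Definition is_hom1 (K M : lmodType R) (P Q : M -> Prop) (phi : K -> M) : Prop :=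
  @is_hom_sq K M unit (fun _ => P) (fun _ => Q) (fun k _ => phi k).

Definition F_rel1 (K L M : lmodType R) (f : K -> L) (P Q : M -> Prop)
    (phi phi' : K -> M) : Prop :=
  @F_rel K L M f unit (fun _ => P) (fun _ => Q) (fun k _ => phi k) (fun k _ => phi' k).

(** The graded module  (+)_n F(P n / Q n):  an element is represented by
    Phi : nat -> (K -> M), Phi n a representative of the degree-n component,
    almost all components zero. *)
Definition is_gr_elt (K M : lmodType R) (P Q : nat -> M -> Prop)
    (Phi : nat -> K -> M) : Prop :=
  (forall n, is_hom1 (P n) (Q n) (Phi n)) /\
  exists N, forall n, (N <= n)%N -> Phi n = (fun _ => 0).

Definition is_rees (I : R -> Prop) (s : nat -> R) : Prop :=
  (forall n, ipow I n (s n)) /\ exists N, forall n, (N <= n)%N -> s n = 0.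

(* Representatives of elements of gr(I) = (+)_n I^n / I^(n+1): the same
   sequences, read modulo I^(n+1) in degree n. *)
Definition is_gr_rep (I : R -> Prop) (s : nat -> R) : Prop := is_rees I s.

(* Action (part (c)): x in degree m acts on the degree n component by
   F(multiplication by x), i.e. phi |-> (k |-> x *: phi k), landing in degree
   n + m. *)
Definition gr_act (K M : lmodType R) (s : nat -> R) (Phi : nat -> K -> M) : nat -> K -> M :=
  fun d k => \sum_(i < d.+1) s (d - i)%N *: Phi i k.

Definition gr_comb (K M : lmodType R) (cs : seq (nat -> R)) (gs : seq (nat -> K -> M))
    : nat -> K -> M :=
  fun d k => \sum_(p <- zip cs gs) gr_act p.1 p.2 d k.

Definition fg_graded (K L M : lmodType R) (f : K -> L) (P Q : nat -> M -> Prop)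
    (coef : (nat -> R) -> Prop) : Prop :=
  exists gs : seq (nat -> K -> M),
    (forall g, List.In g gs -> is_gr_elt P Q g) /\
    forall Phi, is_gr_elt P Q Phi ->
      exists cs : seq (nat -> R), (forall c, List.In c cs -> coef c) /\
        forall n, F_rel1 f (P n) (Q n) (Phi n) (gr_comb cs gs n).

(* The canonical map  (+)_n F(P n/Q n) -> F((+)_n P n/Q n),
   Phi |-> (k |-> (n |-> Phi n k)), is well defined, injective and surjective. *)
Definition F_commutes_sum (K L M : lmodType R) (f : K -> L) (P Q : nat -> M -> Prop) : Prop :=
  (forall Phi Phi', is_gr_elt P Q Phi -> is_gr_elt P Q Phi' ->
     ((forall n, F_rel1 f (P n) (Q n) (Phi n) (Phi' n)) <->
      @F_rel K L M f nat P Q (fun k n => Phi n k) (fun k n => Phi' n k))) /\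
  (forall phi : K -> nat -> M, @is_hom_sq K M nat P Q phi ->
     exists Phi, is_gr_elt P Q Phi /\
       @F_rel K L M f nat P Q phi (fun k n => Phi n k)).

End Defs.

(* Main.v *)
Require Import Defs.
From HB Require Import structures.
From mathcomp Require Import all_boot all_algebra.
From Stdlib Require List.
From Stdlib Require Import FunctionalExtensionality ClassicalEpsilon.

Set Implicit Arguments. Unset Strict Implicit. Unset Printing Implicit Defensive.
Import GRing.Theory.
Local Open Scope ring_scope.

Section Frame.
Variable R : comPzRingType.

Lemma in_app_or' (A : Type) (l m : list A) (a : A) :
  List.In a (l ++ m) -> List.In a l \/ List.In a m.
Proof. exact: List.in_app_or. Qed.
Lemma in_map_iff' (A B : Type) (f : A -> B) (l : list A) (y : B) :
  List.In y (List.map f l) -> exists x, f x = y /\ List.In x l.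
Proof. by move/List.in_map_iff. Qed.

Record Str := mkStr {
  car : Type; szero : car; sadd : car -> car -> car; sopp : car -> car;
  sscal : R -> car -> car; sops : list (car -> car); sU : car -> Prop }.
Arguments sU : clear implicits.

Definition closed (S : Str) (C : car S -> Prop) : Prop :=
  C (szero S) /\ (forall x y, C x -> C y -> C (sadd x y)) /\
  (forall x, C x -> C (sopp x)) /\ (forall r x, C x -> C (sscal r x)) /\
  (forall op x, List.In op (sops S) -> C x -> C (op x)).

Definition span (S : Str) (G : list (car S)) (x : car S) : Prop :=
  forall C, closed C -> (forall g, List.In g G -> C g) -> C x.

Definition Noeth (S : Str) : Prop :=
  forall N : car S -> Prop, closed N -> (forall x, N x -> sU S x) ->
   exists G, (forall g, List.In g G -> N g) /\ (forall x, N x -> span G x).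

Definition wf (S : Str) : Prop :=
  (forall x y z : car S, sadd x (sadd y z) = sadd (sadd x y) z) /\
  (forall x y : car S, sadd x y = sadd y x) /\
  (forall x, sadd (szero S) x = x) /\
  (forall x, sadd x (sopp x) = szero S) /\
  (forall r, sscal r (szero S) = szero S) /\
  (forall op, List.In op (sops S) -> op (szero S) = szero S) /\
  closed (sU S).

Lemma span_closed S G : closed (@span S G).
Proof.
split; [|split; [|split; [|split]]].
- by move=> C [? _] _.
- by move=> x y hx hy C hC hG; have [_ [h _]] := hC; apply: h; [apply: hx|apply: hy].
- by move=> x hx C hC hG; have [_ [_ [h _]]] := hC; apply: h; apply: hx.
- by move=> r x hx C hC hG; have [_ [_ [_ [h _]]]] := hC; apply: h; apply: hx.
- by move=> op x hop hx C hC hG; have [_ [_ [_ [_ h]]]] := hC; apply: h => //; apply: hx.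
Qed.

Lemma span_gen S G g : List.In g G -> @span S G g.
Proof. by move=> hg C _ h; apply: h. Qed.

Lemma span_mono S G G' x : (forall g, List.In g G -> List.In g G') -> @span S G x -> span G' x.
Proof. by move=> hs hx C hC hG; apply: hx => // g /hs; apply: hG. Qed.

Lemma span_in S G (N : car S -> Prop) x : closed N -> (forall g, List.In g G -> N g) -> span G x -> N x.
Proof. by move=> hN hG hx; apply: hx. Qed.

Lemma wf_opp0 S : wf S -> sopp (szero S) = szero S.
Proof.
move=> [hA [hC [h0 [hN _]]]].
by rewrite -{2}(hN (szero S)) h0.
Qed.

Lemma wf_add0r S x : wf S -> sadd x (szero S) = x.
Proof. by move=> [hA [hC [h0 _]]]; rewrite hC h0. Qed.

Definition liftop (S : Str) (op : car S -> car S) : (nat -> car S) -> (nat -> car S) :=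
  fun f n => op (f n).
Definition pshift (S : Str) (f : nat -> car S) : nat -> car S :=
  fun n => match n with 0 => szero S | n'.+1 => f n' end.

Definition liftS (S : Str) (extra : list ((nat -> car S) -> (nat -> car S)))
   (UX : (nat -> car S) -> Prop) : Str :=
  @mkStr (nat -> car S) (fun _ => szero S) (fun f g n => sadd (f n) (g n))
    (fun f n => sopp (f n)) (fun r f n => sscal r (f n))
    (List.map (@liftop S) (sops S) ++ extra) UX.

Definition degle (S : Str) (d : nat) (f : nat -> car S) :=
  forall n, (d < n)%N -> f n = szero S.

Definition UXfin (S : Str) (f : nat -> car S) :=
  (forall n, sU S (f n)) /\ exists D, degle D f.
Definition UXtr (S : Str) (m : nat) (f : nat -> car S) :=
  (forall n, sU S (f n)) /\ forall n, (m <= n)%N -> f n = szero S.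

Definition polyS (S : Str) := liftS [:: @pshift S] (@UXfin S).
Definition truncS (S : Str) (m : nat) := liftS [::] (@UXtr S m).

Section Lift.
Variables (S : Str) (extra : list ((nat -> car S) -> (nat -> car S)))
   (UX : (nat -> car S) -> Prop).
Hypothesis wfS : wf S.
Notation LS := (liftS extra UX).

Lemma liftop_in op : List.In op (sops S) -> List.In (@liftop S op) (sops LS).
Proof. by move=> h; apply: List.in_or_app; left; apply: List.in_map. Qed.

Definition LC (N : car LS -> Prop) d (v : car S) :=
  exists f, N f /\ degle d f /\ f d = v.

Lemma LC_closed N d : closed N -> closed (LC N d).
Proof.
move: (wfS) => [hA [hC [h0 [hN [hs0 [hop0 _]]]]]].
move=> [N0 [NA [NO [NS NOP]]]].
split; [|split; [|split; [|split]]].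
- by exists (fun _ => szero S).
- move=> x y [f [hf [df <-]]] [g [hg [dg <-]]].
  exists (fun n => sadd (f n) (g n)); split; first by apply: NA.
  by split=> // n hn /=; rewrite df // dg // h0.
- move=> x [f [hf [df <-]]]; exists (fun n => sopp (f n)); split; first by apply: NO.
  by split=> // n hn; rewrite df // wf_opp0.
- move=> r x [f [hf [df <-]]]; exists (fun n => sscal r (f n)); split; first by apply: NS.
  by split=> // n hn; rewrite df // hs0.
- move=> op x hop [f [hf [df <-]]]; exists (liftop op f); split.
    by apply: NOP => //; apply: liftop_in.
  by split=> // n hn; rewrite /liftop df // hop0.
Qed.

Lemma core (N : car LS -> Prop) G :
  closed N -> (forall g, List.In g G -> N g) ->
  (forall d f, N f -> degle d f -> exists h, span G h /\ degle d h /\ h d = f d) ->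
  forall d (f : car LS), N f -> (forall n, (d <= n)%N -> f n = szero S) -> span G f.
Proof.
move: (wfS) => [hA [hC [h0 [hN [hs0 [hop0 _]]]]]].
move=> hNc hG hlift; elim=> [|d IH] f hf hd.
  have -> : f = (fun _ => szero S) by apply: functional_extensionality => n; apply: hd.
  by have [? _] := span_closed G.
have [h [sh [dh ehd]]] := hlift d f hf (fun n hn => hd n hn).
have Nh : N h by apply: span_in sh.
pose f' := fun n => sadd (f n) (sopp (h n)).
have Nf' : N f'.
  have [_ [NA [NO _]]] := hNc.
  by apply: (NA f (fun n => sopp (h n))) => //; apply: (NO h).
have sf' : span G f'.
  apply: IH => // n; rewrite leq_eqVlt => /orP [/eqP <-|hn].
    by rewrite /f' ehd hN.
  by rewrite /f' hd // dh // wf_opp0 // h0.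
have -> : f = (fun n => sadd (f' n) (h n)).
  apply: functional_extensionality => n.
  by rewrite /f' -hA [sadd (sopp _) _]hC hN wf_add0r.
by have [_ [SA _]] := span_closed G; apply: (SA f' h).
Qed.

Lemma choose_lifts (N : car LS -> Prop) d ls :
  (forall l, List.In l ls -> LC N d l) ->
  exists Ge, (forall g, List.In g Ge -> N g) /\
    forall l, List.In l ls -> exists h, List.In h Ge /\ degle d h /\ h d = l.
Proof.
elim: ls => [|l ls IH] hls; first by exists [::].
have [f [Nf [df efd]]] := hls l (or_introl erefl).
have [Ge [GN GL]] := IH (fun l' hl' => hls l' (or_intror hl')).
exists (f :: Ge); split.
  by move=> g [<-|hg]; [|apply: GN].
move=> l' [<-|hl']; first by exists f; split; [left|].
by have [h [hh ?]] := GL l' hl'; exists h; split; [right|].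
Qed.

Lemma per_e (N : car LS -> Prop) e :
  Noeth S -> closed N -> (forall x, N x -> forall n, sU S (x n)) ->
  exists Ge, (forall g, List.In g Ge -> N g) /\
   forall v, LC N e v -> exists h, span Ge h /\ degle e h /\ h e = v.
Proof.
move=> hNo hN hU.
have hLU : forall v, LC N e v -> sU S v.
  by move=> v [f [hf [_ <-]]]; apply: hU.
have [ls [lsL Lls]] := hNo (LC N e) (LC_closed e hN) hLU.
have [Ge [GN GL]] := choose_lifts lsL.
exists Ge; split=> // v /Lls hv.
apply: (hv (LC (span Ge) e) (LC_closed e (span_closed Ge))).
move=> l /GL [h [hh [dh ehl]]]; exists h; split=> //; first by apply: span_gen.
Qed.

Lemma combine (N : car LS -> Prop) D :
  Noeth S -> closed N -> (forall x, N x -> forall n, sU S (x n)) ->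
  exists G, (forall g, List.In g G -> N g) /\
   forall e, (e <= D)%N -> forall v, LC N e v -> exists h, span G h /\ degle e h /\ h e = v.
Proof.
move=> hNo hN hU; elim: D => [|D IH].
  have [G [GN GL]] := per_e 0 hNo hN hU.
  by exists G; split=> // e; rewrite leqn0 => /eqP ->.
have [G [GN GL]] := IH.
have [G' [GN' GL']] := per_e D.+1 hNo hN hU.
exists (G ++ G'); split.
  by move=> g hg; case: (in_app_or' hg); [apply: GN|apply: GN'].
move=> e; rewrite leq_eqVlt => /orP [/eqP ->|he] v hv.
  have [h [sh hh]] := GL' v hv; exists h; split=> //.
  by apply: span_mono sh => g hg; apply: List.in_or_app; right.
have [h [sh hh]] := GL e he v hv; exists h; split=> //.
by apply: span_mono sh => g hg; apply: List.in_or_app; left.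
Qed.

End Lift.


Lemma wf_lift S extra UX : wf S ->
  (forall op, List.In op extra -> op (fun _ => szero S) = (fun _ => szero S)) ->
  closed (S := liftS extra UX) UX -> wf (liftS extra UX).
Proof.
move=> [hA [hC [h0 [hN [hs0 [hop0 hU]]]]]] hex hUX.
split; [|split; [|split; [|split; [|split; [|split]]]]] => //.
- by move=> x y z; apply: functional_extensionality => n /=; rewrite hA.
- by move=> x y; apply: functional_extensionality => n /=; rewrite hC.
- by move=> x; apply: functional_extensionality => n /=; rewrite h0.
- by move=> x; apply: functional_extensionality => n /=; rewrite hN.
- by move=> r; apply: functional_extensionality => n /=; rewrite hs0.
- move=> op /= hop; case: (in_app_or' hop) => [h|h]; last by apply: hex.
  have [op' [<- hop']] := in_map_iff' h.
  by apply: functional_extensionality => n; rewrite /liftop hop0.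
Qed.

Lemma closed_UXfin S : wf S -> closed (S := polyS S) (@UXfin S).
Proof.
move=> wfS; move: (wfS) => [hA [hC [h0 [hN [hs0 [hop0 [U0 [UA [UO [US UOP]]]]]]]]]].
split; [|split; [|split; [|split]]].
- by split=> // ; exists 0%N.
- move=> x y [ux [Dx hx]] [uy [Dy hy]]; split; first by move=> n; apply: UA.
  exists (maxn Dx Dy) => n; rewrite gtn_max => /andP [h1 h2] /=.
  by rewrite hx // hy // h0.
- move=> x [ux [Dx hx]]; split; first by move=> n; apply: UO.
  by exists Dx => n hn /=; rewrite hx // wf_opp0.
- move=> r x [ux [Dx hx]]; split; first by move=> n; apply: US.
  by exists Dx => n hn /=; rewrite hx // hs0.
- move=> op x /= hop [ux [Dx hx]]; case: (in_app_or' hop) => [h|[<-|[]]].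
    have [op' [<- hop']] := in_map_iff' h.
    split; first by move=> n; apply: UOP.
    by exists Dx => n hn; rewrite /liftop hx // hop0.
  split; first by case=> [|n] //=.
  by exists Dx.+1; case=> [|n] //= hn; apply: hx.
Qed.

Lemma closed_UXtr S m : wf S -> closed (S := truncS S m) (@UXtr S m).
Proof.
move=> wfS; move: (wfS) => [hA [hC [h0 [hN [hs0 [hop0 [U0 [UA [UO [US UOP]]]]]]]]]].
split; [|split; [|split; [|split]]].
- by split.
- move=> x y [ux hx] [uy hy]; split; first by move=> n; apply: UA.
  by move=> n hn /=; rewrite hx // hy // h0.
- move=> x [ux hx]; split; first by move=> n; apply: UO.
  by move=> n hn /=; rewrite hx // wf_opp0.
- move=> r x [ux hx]; split; first by move=> n; apply: US.
  by move=> n hn /=; rewrite hx // hs0.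
- move=> op x /= hop [ux hx]; case: (in_app_or' hop) => [h|[]].
  have [op' [<- hop']] := in_map_iff' h.
  split; first by move=> n; apply: UOP.
  by move=> n hn; rewrite /liftop hx // hop0.
Qed.

Lemma wf_poly S : wf S -> wf (polyS S).
Proof.
move=> h; apply: wf_lift => //; last by apply: closed_UXfin.
by move=> op [<-|[]]; apply: functional_extensionality; case.
Qed.

Lemma wf_trunc S m : wf S -> wf (truncS S m).
Proof. by move=> h; apply: wf_lift => //; last by apply: closed_UXtr. Qed.

Fixpoint shiftn S k (f : nat -> car S) : nat -> car S :=
  match k with 0 => f | k'.+1 => pshift (shiftn k' f) end.

Lemma shiftn_deg S k D (f : nat -> car S) : degle D f -> degle (D + k) (shiftn k f).
Proof.
elim: k => [|k IH] hf; first by rewrite addn0.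
move=> [|n] //=; rewrite addnS ltnS => hn; exact: IH.
Qed.

Lemma shiftn_val S k D (f : nat -> car S) : shiftn k f (D + k)%N = f D.
Proof. by elim: k => [|k IH]; rewrite ?addn0 // addnS. Qed.

Theorem poly_noeth S : wf S -> Noeth S -> Noeth (polyS S).
Proof.
move=> wfS hNo N hN hNU.
have hU : forall x, N x -> forall n, sU S (x n) by move=> x /hNU [].
have LCmono : forall d v, LC N d v -> LC N d.+1 v.
  move=> d v [f [hf [df <-]]]; exists (pshift f); split.
    by have [_ [_ [_ [_ h]]]] := hN; apply: h => //=; apply: List.in_or_app; right; left.
  by split=> // [[|n]] //=; rewrite ltnS; apply: df.
have LCmono' : forall d d' v, (d <= d')%N -> LC N d v -> LC N d' v.
  move=> d d' v /subnK <-; elim: (d' - d)%N => [|k IH] //= h.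
  by apply: LCmono; apply: IH.
pose UL := fun v => exists d, LC N d v.
have ULc : closed UL.
  have hc := fun d => LC_closed wfS d hN.
  split; [|split; [|split; [|split]]].
  - by exists 0%N; have [? _] := hc 0%N.
  - move=> x y [d hx] [d' hy]; exists (maxn d d'); have [_ [h _]] := hc (maxn d d').
    by apply: h; [apply: LCmono' hx; apply: leq_maxl|apply: LCmono' hy; apply: leq_maxr].
  - by move=> x [d hx]; exists d; have [_ [_ [h _]]] := hc d; apply: h.
  - by move=> r x [d hx]; exists d; have [_ [_ [_ [h _]]]] := hc d; apply: h.
  - by move=> op x hop [d hx]; exists d; have [_ [_ [_ [_ h]]]] := hc d; apply: h.
have ULU : forall v, UL v -> sU S v by move=> v [d [f [hf [_ <-]]]]; apply: hU.
have [ls [lsL Lls]] := hNo UL ULc ULU.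
have [D hD] : exists D, forall l, List.In l ls -> LC N D l.
  elim: ls lsL {Lls} => [|l ls IH] hl; first by exists 0%N.
  have [D hD] := IH (fun l' h => hl l' (or_intror h)).
  have [d hd] := hl l (or_introl erefl).
  exists (maxn D d) => l' [<-|hl']; first by apply: LCmono' hd; apply: leq_maxr.
  by apply: LCmono' (hD l' hl'); apply: leq_maxl.
have LCD : forall d v, LC N d v -> LC N D v.
  move=> d v hv; have := Lls v (ex_intro _ d hv).
  by move=> sv; apply: (sv _ (LC_closed wfS D hN)).
have [G [GN GL]] := combine wfS D hNo hN hU.
exists G; split=> //.
have key := core wfS hN GN.
move=> f hf; have [_ [D' hD']] := hNU f hf.
apply: (key _ D'.+1) => //; last first.
move=> d f' hf' df'.
have hv : LC N d (f' d) by exists f'.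
case: (leqP d D) => hdD; first by apply: GL.
have [h [sh [dh ehd]]] := GL D (leqnn D) _ (LCD d _ hv).
exists (shiftn (d - D) h); split; last split.
- elim: (d - D)%N => [|k IH] //=.
  have [_ [_ [_ [_ hop]]]] := span_closed G; apply: hop => //.
  by apply: List.in_or_app; right; left.
- by rewrite -{1}(subnKC (ltnW hdD)); apply: shiftn_deg.
- by rewrite -{2}(subnKC (ltnW hdD)) shiftn_val.
Qed.

Theorem trunc_noeth S m : wf S -> Noeth S -> Noeth (truncS S m).
Proof.
move=> wfS hNo N hN hNU.
have hU : forall x, N x -> forall n, sU S (x n) by move=> x /hNU [].
have [G [GN GL]] := combine wfS m hNo hN hU.
exists G; split=> //.
have key := core wfS hN GN.
move=> f hf; have [_ hm] := hNU f hf.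
apply: (key _ m) => //.
move=> d f' hf' df'.
case: (leqP d m) => hdm; first by apply: GL => //; exists f'.
exists (fun _ => szero S); split; first by have [? _] := span_closed G.
split=> //; have [_ h] := hNU f' hf'; rewrite h //; exact: ltnW.
Qed.

End Frame.
Arguments sU {R} s _.

Set Implicit Arguments. Unset Strict Implicit. Unset Printing Implicit Defensive.
Import GRing.Theory.
Local Open Scope ring_scope.

Section Base.
Variable R : comPzRingType.

Definition SR : Str R := @mkStr R R 0 +%R (fun x => - x) *%R [::] (fun _ => True).

Lemma wf_SR : wf SR.
Proof.
split; [|split; [|split; [|split; [|split; [|split]]]]] => //=.
- by move=> x y z; rewrite addrA.
- by move=> x y; rewrite addrC.
- by move=> x; rewrite add0r.
- by move=> x; rewrite subrr.
- by move=> r; rewrite mulr0.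
Qed.

Lemma comb_in_ring (gs : seq R) x : List.In x gs ->
  exists cs : seq R, x = \sum_(p <- zip cs gs) p.1 * p.2.
Proof.
elim: gs => [|g gs IH] //= [<-|/IH [cs ->]].
  by exists [:: 1]; case: gs {IH} => [|? ?]; rewrite /= big_cons big_nil mul1r addr0.
by exists (0 :: cs); rewrite /= big_cons mul0r add0r.
Qed.

Lemma comb_closed_ring (C : R -> Prop) (gs cs : seq R) :
  closed (S := SR) C -> (forall g, List.In g gs -> C g) ->
  C (\sum_(p <- zip cs gs) p.1 * p.2).
Proof.
move=> [C0 [CA [_ [CS _]]]]; elim: gs cs => [|g gs IH] [|c cs] hg;
  rewrite /= ?big_nil ?big_cons //.
apply: CA; first by apply: (CS c g); apply: hg; left.
by apply: IH => g' h; apply: hg; right.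
Qed.

Lemma noeth_SR : noetherian R -> Noeth SR.
Proof.
move=> hR N hN _.
have hI : is_ideal N.
  by have [N0 [NA [_ [NS _]]]] := hN; split=> //; split=> // r x; apply: NS.
have [gs hgs] := hR N hI.
exists gs; split.
  by move=> g /comb_in_ring hg; apply/hgs.
move=> x /hgs [cs ->] C hC hG; exact: comb_closed_ring.
Qed.

Fixpoint pstr (m r : nat) : Str R :=
  match r with 0 => truncS SR m | r'.+1 => polyS (pstr m r') end.

Lemma wf_pstr m r : wf (pstr m r).
Proof. by elim: r => [|r IH] /=; [apply: wf_trunc; apply: wf_SR|apply: wf_poly]. Qed.

Lemma noeth_pstr m r : noetherian R -> Noeth (pstr m r).
Proof.
move=> hR; elim: r => [|r IH] /=.
  by apply: trunc_noeth; [apply: wf_SR|apply: noeth_SR].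
by apply: poly_noeth => //; apply: wf_pstr.
Qed.

End Base.

Set Implicit Arguments. Unset Strict Implicit. Unset Printing Implicit Defensive.
Import GRing.Theory.
Local Open Scope ring_scope.

Unset Implicit Arguments.
Section Pi.
Variables (R : comPzRingType) (M : lmodType R) (ms : seq M) (a : nat).
Local Notation s := (size ms).
Local Notation m := (a * size ms)%N.
Local Notation P r := (pstr R m r).

Definition TT := nat -> nat -> M.
Definition pi0 (c : nat -> R) : TT :=
  fun n i => if n == 0%N then \sum_(j < s) c (i * s + j)%N *: nth 0 ms j else 0.

Fixpoint pi (xs : seq R) : car (P (size xs)) -> TT :=
  match xs return car (P (size xs)) -> TT with
  | [::] => pi0
  | x :: xs' => fun p n i => \sum_(k < n.+1) x ^+ k *: pi xs' (p k) (n - k)%N i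
  end.

Definition tact (x : R) (v : TT) : TT :=
  fun n i => if n is n'.+1 then x *: v n' i else 0.

Lemma pi_zero xs n i : pi xs (szero (P (size xs))) n i = 0.
Proof.
elim: xs n => [|x xs IH] n /=; first by rewrite /pi0; case: eqP => // _; rewrite big1 // => j _; rewrite /= scale0r.
by rewrite big1 // => k _; rewrite IH scaler0.
Qed.

Lemma pi_add xs p q n i : pi xs (sadd p q) n i = pi xs p n i + pi xs q n i.
Proof.
elim: xs p q n => [|x xs IH] p q n /=.
  rewrite /pi0; case: eqP => _; last by rewrite addr0.
  by rewrite -big_split /=; apply: eq_bigr => j _; rewrite scalerDl.
by rewrite -big_split /=; apply: eq_bigr => k _; rewrite IH scalerDr.
Qed.

Lemma pi_opp xs p n i : pi xs (sopp p) n i = - pi xs p n i.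
Proof.
elim: xs p n => [|x xs IH] p n /=.
  rewrite /pi0; case: eqP => _; last by rewrite oppr0.
  by rewrite -sumrN; apply: eq_bigr => j _; rewrite scaleNr.
by rewrite -sumrN; apply: eq_bigr => k _; rewrite IH scalerN.
Qed.

Lemma pi_scal xs r p n i : pi xs (sscal r p) n i = r *: pi xs p n i.
Proof.
elim: xs p n => [|x xs IH] p n /=.
  rewrite /pi0; case: eqP => _; last by rewrite scaler0.
  by rewrite scaler_sumr; apply: eq_bigr => j _; rewrite scalerA.
rewrite scaler_sumr; apply: eq_bigr => k _; rewrite IH !scalerA mulrC //.
Qed.

Lemma pi_ops1 xs op : List.In op (sops (P (size xs))) ->
  exists x, List.In x xs /\ forall p n i, pi xs (op p) n i = tact x (pi xs p) n i.
Proof.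
elim: xs op => [|x xs IH] op //= hop.
case: (in_app_or' hop) => [h|[<-|[]]].
  have [op' [<- hop']] := in_map_iff' h.
  have [y [hy Hy]] := IH op' hop'.
  exists y; split; first by right.
  move=> p [|n] i /=; first by rewrite big_ord1 Hy /= scaler0.
  rewrite big_ord_recr /= subnn Hy /= scaler0 addr0 scaler_sumr.
  apply: eq_bigr => k _; rewrite /liftop Hy subSn; last by rewrite -ltnS.
  by rewrite /= !scalerA mulrC.
exists x; split; first by left.
move=> p [|n] i /=; first by rewrite big_ord1 /= pi_zero scaler0.
rewrite big_ord_recl /= pi_zero scaler0 add0r scaler_sumr.
apply: eq_bigr => k _; rewrite /bump /= add1n subSS exprS -scalerA //.
Qed.

Lemma pi_ops2 xs x : List.In x xs ->
  exists op, List.In op (sops (P (size xs))) /\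
    forall p n i, pi xs (op p) n i = tact x (pi xs p) n i.
Proof.
elim: xs => [|y xs IH] //= [<-|hx].
  exists (@pshift _ _); split.
    by apply: List.in_or_app; right; left.
  move=> p [|n] i /=; first by rewrite big_ord1 /= pi_zero scaler0.
  rewrite big_ord_recl /= pi_zero scaler0 add0r scaler_sumr.
  apply: eq_bigr => k _; rewrite /bump /= add1n subSS exprS -scalerA //.
have [op' [hop' Hy]] := IH hx.
exists (liftop op'); split; first by apply: List.in_or_app; left; apply: List.in_map.
move=> p [|n] i /=; first by rewrite big_ord1 Hy /= scaler0.
rewrite big_ord_recr /= subnn Hy /= scaler0 addr0 scaler_sumr.
apply: eq_bigr => k _; rewrite /liftop Hy subSn; last by rewrite -ltnS.
by rewrite /= !scalerA mulrC.
Qed.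

Fixpoint pbase (r : nat) (c : nat -> R) : car (P r) :=
  match r return car (P r) with
  | 0 => c
  | r'.+1 => fun k => if k == 0%N then pbase r' c else szero (P r')
  end.

Lemma pi_pbase xs (c : nat -> R) n i : pi xs (pbase (size xs) c) n i = pi0 c n i.
Proof.
elim: xs n => [|x xs IH] n //=.
rewrite big_ord_recl /= IH expr0 scale1r subn0 big1 ?addr0 // => k _.
by rewrite /bump /= add1n pi_zero scaler0.
Qed.

Lemma U_pbase r (c : nat -> R) : (forall n, (m <= n)%N -> c n = 0) -> sU (P r) (pbase r c).
Proof.
move=> hc; elim: r => [|r IH] /=; first by split.
split.
  move=> [|k] //=.
  by have [_ [_ [_ [_ [_ [_ [? _]]]]]]] := wf_pstr R m r.
by exists 0%N => [[|k]].
Qed.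

End Pi.
Arguments pi {R M} ms a xs _ _ _.
Arguments pi0 {R M} ms _ _ _.
Arguments tact {R M} x v _ _.
Arguments pbase {R M} ms a r c.

Set Implicit Arguments. Unset Strict Implicit. Unset Printing Implicit Defensive.
Import GRing.Theory.
Local Open Scope ring_scope.

Lemma sum_zip_ind (A B : Type) (V : zmodType) (C : V -> Prop) (F : A -> B -> V)
    (cs : seq A) (gs : seq B) :
  C 0 -> (forall x y, C x -> C y -> C (x + y)) ->
  (forall c g, List.In g gs -> C (F c g)) -> C (\sum_(p <- zip cs gs) F p.1 p.2).
Proof.
move=> C0 CA CF; elim: gs cs CF => [|g gs IH] [|c cs] CF; rewrite /= ?big_nil ?big_cons //.
apply: CA; first by apply: CF; left.
by apply: IH => c' g' h; apply: CF; right.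
Qed.

Lemma sum_seq_ind (T : eqType) (V : zmodType) (C : V -> Prop) (F : T -> V) (rs : seq T) :
  C 0 -> (forall x y, C x -> C y -> C (x + y)) ->
  (forall p, p \in rs -> C (F p)) -> C (\sum_(p <- rs) F p).
Proof. by move=> C0 CA CF; rewrite big_seq; apply: big_ind. Qed.

Lemma In_nth (T : Type) (x0 x : T) s : List.In x s -> exists j, (j < size s)%N /\ nth x0 s j = x.
Proof.
elim: s => [|y s IH] //= [<-|/IH [j [hj <-]]]; first by exists 0%N.
by exists j.+1.
Qed.

Lemma nth_In (T : Type) (x0 : T) s j : (j < size s)%N -> List.In (nth x0 s j) s.
Proof. by elim: s j => [|y s IH] [|j] //= h; [left|right; apply: IH]. Qed.

Lemma mem_In (T : eqType) (x : T) s : x \in s -> List.In x s.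
Proof. by elim: s => [|y s IH] //=; rewrite inE => /orP [/eqP ->|/IH]; [left|right]. Qed.

Section Ideals.
Variables (R : comPzRingType) (I : R -> Prop).
Hypothesis hI : is_ideal I.

Lemma ipow0 n : ipow I n 0.
Proof. by case: n => //= n; exists [::]; rewrite big_nil. Qed.

Lemma ipowD n x y : ipow I n x -> ipow I n y -> ipow I n (x + y).
Proof.
case: n => //= n [rs [hrs ->]] [rs' [hrs' ->]].
exists (rs ++ rs'); rewrite big_cat; split=> // p; rewrite mem_cat => /orP [/hrs|/hrs'] //.
Qed.

Lemma ipowMl n r x : ipow I n x -> ipow I n (r * x).
Proof.
elim: n r x => //= n IH r x [rs [hrs ->]].
exists [seq (r * p.1, p.2) | p <- rs]; split.
  move=> p /mapP [q hq ->] /=; have [h1 h2] := hrs q hq; split=> //; exact: IH.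
by rewrite big_map mulr_sumr; apply: eq_bigr => p _ /=; rewrite mulrA.
Qed.

Lemma ipowN n x : ipow I n x -> ipow I n (- x).
Proof. by move=> h; rewrite -mulN1r; apply: ipowMl. Qed.

Lemma ipowMI n x y : ipow I n x -> I y -> ipow I n.+1 (x * y).
Proof. by move=> hx hy; exists [:: (x, y)]; rewrite big_seq1; split=> // p; rewrite inE => /eqP ->. Qed.

Lemma ipow1 x : I x -> ipow I 1 x.
Proof. by move=> hx; rewrite -(mul1r x); apply: ipowMI. Qed.

Lemma ipow_sum n (T : eqType) (F : T -> R) rs :
  (forall p, p \in rs -> ipow I n (F p)) -> ipow I n (\sum_(p <- rs) F p).
Proof. by apply: sum_seq_ind; [apply: ipow0|apply: ipowD]. Qed.

Lemma ipowM m n s t : ipow I m s -> ipow I n t -> ipow I (n + m) (s * t).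
Proof.
elim: m s => [|m IH] s /=; first by rewrite addn0 => _; apply: ipowMl.
move=> [rs [hrs ->]] ht; rewrite mulr_suml addnS; apply: ipow_sum => p /hrs [h1 h2].
by rewrite mulrAC; apply: ipowMI => //; apply: IH.
Qed.

Variable (M : lmodType R).

Lemma ps0 (A : R -> Prop) (N : M -> Prop) : prod_span A N 0.
Proof. by exists [::]; rewrite big_nil. Qed.

Lemma psD (A : R -> Prop) (N : M -> Prop) x y :
  prod_span A N x -> prod_span A N y -> prod_span A N (x + y).
Proof.
move=> [rs [hrs ->]] [rs' [hrs' ->]].
exists (rs ++ rs'); rewrite big_cat; split=> // p; rewrite mem_cat => /orP [/hrs|/hrs'] //.
Qed.

Lemma psM (A A' : R -> Prop) (N : M -> Prop) (s : R) x :
  (forall t, A t -> A' (s * t)) -> prod_span A N x -> prod_span A' N (s *: x).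
Proof.
move=> hA [rs [hrs ->]].
exists [seq (s * p.1, p.2) | p <- rs]; split.
  by move=> p /mapP [q hq ->] /=; have [h1 h2] := hrs q hq; split=> //; apply: hA.
by rewrite big_map scaler_sumr; apply: eq_bigr => p _ /=; rewrite scalerA.
Qed.

Lemma IpowM_scal (N : M -> Prop) n r x : IpowM I N n x -> IpowM I N n (r *: x).
Proof. by apply: psM => t; apply: ipowMl. Qed.

Lemma IpowM_mul (N : M -> Prop) m n s x :
  ipow I m s -> IpowM I N n x -> IpowM I N (n + m) (s *: x).
Proof. by move=> hs; apply: psM => t ht; apply: ipowM. Qed.

End Ideals.

Section GrAct.
Variables (R : comPzRingType) (K M : lmodType R).

Definition xsh (x : R) (s : nat -> R) : nat -> R :=
  fun n => if n is n'.+1 then x * s n' else 0.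
Definition e0 : nat -> R := fun n => if n == 0%N then 1 else 0.

Lemma gr_actD (s s' : nat -> R) (Phi : nat -> K -> M) d k :
  gr_act (fun n => s n + s' n) Phi d k = gr_act s Phi d k + gr_act s' Phi d k.
Proof. by rewrite /gr_act -big_split; apply: eq_bigr => i _; rewrite scalerDl. Qed.

Lemma gr_actN (s : nat -> R) (Phi : nat -> K -> M) d k :
  gr_act (fun n => - s n) Phi d k = - gr_act s Phi d k.
Proof. by rewrite /gr_act -sumrN; apply: eq_bigr => i _; rewrite scaleNr. Qed.

Lemma gr_actZ r (s : nat -> R) (Phi : nat -> K -> M) d k :
  gr_act (fun n => r * s n) Phi d k = r *: gr_act s Phi d k.
Proof. by rewrite /gr_act scaler_sumr; apply: eq_bigr => i _; rewrite scalerA. Qed.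

Lemma gr_act0 (Phi : nat -> K -> M) d k : gr_act (fun _ => 0) Phi d k = 0.
Proof. by rewrite /gr_act big1 // => i _; rewrite scale0r. Qed.

Lemma gr_act_xsh x (s : nat -> R) (Phi : nat -> K -> M) d k :
  gr_act (xsh x s) Phi d k = if d is d'.+1 then x *: gr_act s Phi d' k else 0.
Proof.
rewrite /gr_act; case: d => [|d]; first by rewrite big_ord1 /= scale0r.
rewrite big_ord_recr /= subnn scale0r addr0 scaler_sumr.
apply: eq_bigr => i _; rewrite subSn; last by rewrite -ltnS.
by rewrite /= scalerA.
Qed.

Lemma gr_act_e0 (Phi : nat -> K -> M) d k : gr_act e0 Phi d k = Phi d k.
Proof.
rewrite /gr_act big_ord_recr /= subnn /e0 /= scale1r big1 ?add0r // => i _.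
by rewrite subn_eq0 leqNgt ltn_ord /= scale0r.
Qed.

End GrAct.

Set Implicit Arguments. Unset Strict Implicit. Unset Printing Implicit Defensive.
Import GRing.Theory.
Local Open Scope ring_scope.

Section Alg.
Variables (R : comPzRingType) (V : lmodType R).
Lemma L1 (u u' v v' : V) : (u + u') - (v + v') = (u - v) + (u' - v').
Proof. by rewrite opprD addrACA. Qed.
Lemma L2 r (x y z w : V) : r *: (x + y) + (z + w) = (r *: x + z) + (r *: y + w).
Proof. by rewrite scalerDr addrACA. Qed.
Lemma L3 (u x y : V) r : - u - (r *: - x + - y) = - (u - (r *: x + y)).
Proof. by rewrite scalerN !opprD !opprK. Qed.
Lemma L4 (u x y : V) r c : c *: u - (r *: (c *: x) + c *: y) = c *: (u - (r *: x + y)).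
Proof. by rewrite scalerA mulrC -scalerA -scalerDr scalerBr. Qed.
End Alg.

Section Main.
Variables (R : comPzRingType) (K M : lmodType R) (I : R -> Prop) (Q : nat -> M -> Prop).
Hypotheses (hI : is_ideal I) (HQ0 : forall n, Q n 0)
  (HQA : forall n x y, Q n x -> Q n y -> Q n (x + y))
  (HQS : forall n r x, Q n x -> Q n (r *: x))
  (HQM : forall m n s x, ipow I m s -> Q n x -> Q (n + m) (s *: x)).
Variables (ks : seq K) (ms : seq M) (xs : seq R).
Hypotheses (hks : forall k : K, exists cs : seq R, k = \sum_(p <- zip cs ks) p.1 *: p.2)
  (hms : forall x : M, exists cs : seq R, x = \sum_(p <- zip cs ms) p.1 *: p.2)
  (hxs : forall x, I x <-> exists cs : seq R, x = \sum_(p <- zip cs xs) p.1 * p.2).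

Local Notation a := (size ks).
Local Notation Pm := (IpowM I (fun _ : M => True)).
Local Notation PS := (pstr R (a * size ms) (size xs)).
Local Notation piP := (pi ms a xs).

Lemma HQN n x : Q n x -> Q n (- x).
Proof. by move=> h; rewrite -scaleN1r; apply: HQS. Qed.
Lemma HQB n x y : Q n x -> Q n y -> Q n (x - y).
Proof. by move=> hx hy; apply: HQA => //; apply: HQN. Qed.
Lemma HQx n x v : I x -> Q n v -> Q n.+1 (x *: v).
Proof. by move=> hx hv; rewrite -addn1; apply: HQM => //; apply: ipow1. Qed.

Lemma Pm0 n : Pm n 0. Proof. exact: ps0. Qed.
Lemma PmA n x y : Pm n x -> Pm n y -> Pm n (x + y). Proof. exact: psD. Qed.
Lemma PmS n r x : Pm n x -> Pm n (r *: x). Proof. exact: IpowM_scal. Qed.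
Lemma Pmx n x v : I x -> Pm n v -> Pm n.+1 (x *: v).
Proof. by move=> hx hv; rewrite -addn1; apply: IpowM_mul => //; apply: ipow1. Qed.

Lemma xs_I x : List.In x xs -> I x.
Proof. by move=> /comb_in_ring h; apply/hxs. Qed.

Lemma hom1_intro n (phi : K -> M) :
  (forall k, Pm n (phi k)) ->
  (forall r k1 k2, Q n (phi (r *: k1 + k2) - (r *: phi k1 + phi k2))) ->
  is_hom1 (Pm n) (Q n) phi.
Proof.
move=> hP hL; split; first by move=> k _; apply: hP.
split; last by move=> r k1 k2 _; apply: hL.
by move=> k; exists [:: tt] => [[]].
Qed.

Definition grelt := is_gr_elt Pm Q (K := K).

Lemma grelt_P (Phi : nat -> K -> M) n k : grelt Phi -> Pm n (Phi n k).
Proof. by move=> [h _]; have [h1 _] := h n; apply: (h1 k tt). Qed.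
Lemma grelt_L (Phi : nat -> K -> M) n r k1 k2 : grelt Phi ->
  Q n (Phi n (r *: k1 + k2) - (r *: Phi n k1 + Phi n k2)).
Proof. by move=> [h _]; have [_ [_ h3]] := h n; apply: (h3 r k1 k2 tt). Qed.

Lemma grelt_intro (Phi : nat -> K -> M) :
  (forall n k, Pm n (Phi n k)) ->
  (forall n r k1 k2, Q n (Phi n (r *: k1 + k2) - (r *: Phi n k1 + Phi n k2))) ->
  (exists N, forall n, (N <= n)%N -> forall k, Phi n k = 0) -> grelt Phi.
Proof.
move=> hP hL [N hN]; split; first by move=> n; apply: hom1_intro.
by exists N => n hn; apply: functional_extensionality => k; apply: hN.
Qed.

Lemma grelt_bound (Phi : nat -> K -> M) : grelt Phi ->
  exists N, forall n, (N <= n)%N -> forall k, Phi n k = 0.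
Proof. by move=> [_ [N hN]]; exists N => n hn k; rewrite hN. Qed.

Lemma grelt0 : grelt (fun _ _ => 0).
Proof.
apply: grelt_intro => //; first by move=> *; apply: Pm0.
  by move=> n r k1 k2; rewrite scaler0 !addr0 subrr.
by exists 0%N.
Qed.

Lemma greltD Phi Phi' : grelt Phi -> grelt Phi' -> grelt (fun n k => Phi n k + Phi' n k).
Proof.
move=> h h'; apply: grelt_intro.
- by move=> n k; apply: PmA; apply: grelt_P.
- by move=> n r k1 k2; rewrite L2 L1; apply: HQA; apply: grelt_L.
- have [N hN] := grelt_bound h; have [N' hN'] := grelt_bound h'.
  exists (maxn N N') => n; rewrite geq_max => /andP [h1 h2] k.
  by rewrite hN // hN' // addr0.
Qed.

Lemma greltN Phi : grelt Phi -> grelt (fun n k => - Phi n k).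
Proof.
move=> h; apply: grelt_intro.
- by move=> n k; rewrite -scaleN1r; apply: PmS; apply: grelt_P.
- by move=> n r k1 k2; rewrite L3; apply: HQN; apply: grelt_L.
- have [N hN] := grelt_bound h; exists N => n hn k; by rewrite hN // oppr0.
Qed.

Lemma greltZ c Phi : grelt Phi -> grelt (fun n k => c *: Phi n k).
Proof.
move=> h; apply: grelt_intro.
- by move=> n k; apply: PmS; apply: grelt_P.
- by move=> n r k1 k2; rewrite L4; apply: HQS; apply: grelt_L.
- have [N hN] := grelt_bound h; exists N => n hn k; by rewrite hN // scaler0.
Qed.

Definition gract (x : R) (Phi : nat -> K -> M) : nat -> K -> M :=
  fun n k => if n is n'.+1 then x *: Phi n' k else 0.

Lemma greltX x Phi : I x -> grelt Phi -> grelt (gract x Phi).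
Proof.
move=> hx h; apply: grelt_intro.
- by move=> [|n] k /=; [apply: Pm0|apply: Pmx => //; apply: grelt_P].
- move=> [|n] r k1 k2 /=; first by rewrite scaler0 !addr0 subrr.
  by rewrite L4; apply: HQx => //; apply: grelt_L.
- have [N hN] := grelt_bound h; exists N.+1 => [[|n]] //= hn k; by rewrite hN // scaler0.
Qed.

Definition cong (p : car PS) (Phi : nat -> K -> M) :=
  forall n i, (i < a)%N -> Q n (piP p n i - Phi n (nth 0 ks i)).

Definition NN (p : car PS) := sU PS p /\ exists Phi, grelt Phi /\ cong p Phi.

Lemma wfPS : wf PS. Proof. exact: wf_pstr. Qed.

Lemma NN_closed : closed NN.
Proof.
have [_ [_ [_ [_ [_ [_ [U0 [UA [UO [US UOP]]]]]]]]]] := wfPS.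
split; [|split; [|split; [|split]]].
- split=> //; exists (fun _ _ => 0); split; first exact: grelt0.
  by move=> n i _; rewrite pi_zero subrr.
- move=> p q [up [Phi [gP cP]]] [uq [Phi' [gP' cP']]]; split; first by apply: UA.
  exists (fun n k => Phi n k + Phi' n k); split; first by apply: greltD.
  by move=> n i hi; rewrite pi_add L1; apply: HQA; [apply: cP|apply: cP'].
- move=> p [up [Phi [gP cP]]]; split; first by apply: UO.
  exists (fun n k => - Phi n k); split; first by apply: greltN.
  by move=> n i hi; rewrite pi_opp -opprD; apply: HQN; apply: cP.
- move=> r p [up [Phi [gP cP]]]; split; first by apply: US.
  exists (fun n k => r *: Phi n k); split; first by apply: greltZ.
  by move=> n i hi; rewrite pi_scal -scalerBr; apply: HQS; apply: cP.
- move=> op p hop [up [Phi [gP cP]]]; split; first by apply: UOP.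
  have [x [hx Hx]] := @pi_ops1 R M ms a xs op hop.
  exists (gract x Phi); split; first by apply: greltX => //; apply: xs_I.
  move=> [|n] i hi; rewrite Hx /=; first by rewrite subrr.
  by rewrite -scalerBr; apply: HQx; [apply: xs_I|apply: cP].
Qed.


Definition ImA (v : nat -> nat -> M) :=
  exists p, sU PS p /\ forall n i, (i < a)%N -> piP p n i = v n i.

Lemma ImA_ext v v' : ImA v -> (forall n i, (i < a)%N -> v n i = v' n i) -> ImA v'.
Proof. by move=> [p [up hp]] h; exists p; split=> // n i hi; rewrite hp // h. Qed.

Lemma ImA0 : ImA (fun _ _ => 0).
Proof.
have [_ [_ [_ [_ [_ [_ [U0 _]]]]]]] := wfPS.
by exists (szero PS); split=> // n i _; rewrite pi_zero.
Qed.

Lemma ImAD u v : ImA u -> ImA v -> ImA (fun n i => u n i + v n i).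
Proof.
have [_ [_ [_ [_ [_ [_ [U0 [UA _]]]]]]]] := wfPS.
move=> [p [up hp]] [q [uq hq]]; exists (sadd p q); split; first by apply: UA.
by move=> n i hi; rewrite pi_add hp // hq.
Qed.

Lemma ImAZ r v : ImA v -> ImA (fun n i => r *: v n i).
Proof.
have [_ [_ [_ [_ [_ [_ [U0 [UA [UO [US _]]]]]]]]]] := wfPS.
move=> [p [up hp]]; exists (sscal r p); split; first by apply: US.
by move=> n i hi; rewrite pi_scal hp.
Qed.

Lemma ImAX x v : List.In x xs -> ImA v -> ImA (tact x v).
Proof.
have [_ [_ [_ [_ [_ [_ [U0 [UA [UO [US UOP]]]]]]]]]] := wfPS.
move=> hx [p [up hp]]; have [op [hop Hop]] := @pi_ops2 R M ms a xs x hx.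
exists (op p); split; first by apply: UOP.
by move=> [|n] i hi; rewrite Hop //= hp.
Qed.

Definition dl n i (w : M) : nat -> nat -> M :=
  fun n' i' => if (n' == n) && (i' == i) then w else 0.

Lemma ImA_dl_sum n i (T : eqType) (F : T -> M) rs :
  (forall p, p \in rs -> ImA (dl n i (F p))) -> ImA (dl n i (\sum_(p <- rs) F p)).
Proof.
apply: (sum_seq_ind (C := fun w => ImA (dl n i w))).
  by apply: ImA_ext ImA0 _ => n' i' _; rewrite /dl; case: ifP.
move=> x y hx hy; apply: ImA_ext (ImAD hx hy) _ => n' i' _.
by rewrite /dl; case: ifP => //; rewrite addr0.
Qed.

Lemma ImA_dl_zip n i (A B : Type) (F : A -> B -> M) cs gs :
  (forall c g, List.In g gs -> ImA (dl n i (F c g))) ->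
  ImA (dl n i (\sum_(p <- zip cs gs) F p.1 p.2)).
Proof.
apply: (sum_zip_ind (C := fun w => ImA (dl n i w))).
  by apply: ImA_ext ImA0 _ => n' i' _; rewrite /dl; case: ifP.
move=> x y hx hy; apply: ImA_ext (ImAD hx hy) _ => n' i' _.
by rewrite /dl; case: ifP => //; rewrite addr0.
Qed.

Lemma idx_eq (s i i' j j' : nat) : (j < s)%N -> (j' < s)%N ->
  (i' * s + j' == i * s + j)%N = (i' == i) && (j' == j).
Proof.
move=> hj hj'; apply/eqP/andP => [h|[/eqP -> /eqP ->]] //.
have s0 : (0 < s)%N by apply: leq_ltn_trans hj.
have := congr1 (divn^~ s) h; rewrite !divnMDl // !divn_small // !addn0 => ei.
by subst i'; split=> //; move/addnI: h => ->.
Qed.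

Lemma ImA_dl n i w : (i < a)%N -> Pm n w -> ImA (dl n i w).
Proof.
move=> hi; elim: n w => [|n IH] w hw.
  have [cs ->] := hms w.
  apply: ImA_dl_zip => c g hg.
  suff hg' : ImA (dl 0 i g).
    apply: ImA_ext (ImAZ c hg') _.
    by move=> n' i' _; rewrite /dl; case: ifP => //; rewrite scaler0.
  have [j [hj <-]] := In_nth 0 hg.
  pose c0 := fun idx : nat => if idx == (i * size ms + j)%N then (1 : R) else 0.
  exists (pbase ms a (size xs) c0); split.
    apply: U_pbase => idx hidx; rewrite /c0; case: eqP => // e; exfalso.
    have h1 : (i * size ms + j < i.+1 * size ms)%N by rewrite mulSn addnC ltn_add2r.
    have h2 : (i.+1 * size ms <= a * size ms)%N by rewrite leq_mul2r hi orbT.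
    by move: hidx; rewrite e => h; have := leq_ltn_trans h (leq_trans h1 h2); rewrite ltnn.
  move=> n' i' hi'; rewrite pi_pbase /pi0 /dl.
  case: (n' == 0%N) => //=.
  case: (eqVneq i' i) => [->|hne].
    rewrite (bigD1 (Ordinal hj)) //= big1 ?addr0.
      by rewrite /c0 eqxx scale1r.
    move=> j' hj'; rewrite /c0 idx_eq // eqxx /=.
    by move: hj'; rewrite -val_eqE /= => /negbTE ->; rewrite scale0r.
  rewrite big1 // => j' _; rewrite /c0 idx_eq // (negbTE hne) /= scale0r //.
have [rs [hrs ->]] := hw.
apply: ImA_dl_sum => p /hrs [[rs2 [hrs2 ->]] _].
rewrite scaler_suml; apply: ImA_dl_sum => q /hrs2 [hq1 /hxs [cs ->]].
rewrite mulr_sumr scaler_suml.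
apply: (ImA_dl_zip (F := fun c x => (q.1 * (c * x)) *: p.2)) => c x hx.
have hw' : Pm n ((q.1 * c) *: p.2).
  exists [:: (q.1 * c, p.2)]; rewrite big_seq1; split=> // p'; rewrite inE => /eqP -> /=.
  by split=> //; rewrite mulrC; apply: ipowMl.
apply: ImA_ext (ImAX hx (IH _ hw')) _.
move=> [|n'] i' _; rewrite /dl /=; first by [].
by rewrite eqSS; case: ifP => _; rewrite ?scaler0 // !scalerA mulrC mulrA.
Qed.

Lemma surj Phi : grelt Phi ->
  exists p, sU PS p /\ forall n i, (i < a)%N -> piP p n i = Phi n (nth 0 ks i).
Proof.
move=> gP; have [N hN] := grelt_bound gP.
suff : ImA (fun n i => Phi n (nth 0 ks i)) by [].
have key : forall N1, ImA (fun n i => if (n < N1)%N then Phi n (nth 0 ks i) else 0).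
  elim=> [|N1 IH]; first by apply: ImA_ext ImA0 _.
  have inner : forall a', ImA (fun n i => (if (n < N1)%N then Phi n (nth 0 ks i) else 0)
        + (if (n == N1) && (i < a')%N then Phi n (nth 0 ks i) else 0)).
    elim=> [|a' IHa].
      by apply: ImA_ext IH _ => n i _; rewrite ltn0 andbF addr0.
    case: (ltnP a' a) => ha.
      apply: ImA_ext (ImAD IHa (ImA_dl ha (grelt_P N1 (nth 0 ks a') gP))) _.
      move=> n i hi; rewrite -addrA; congr (_ + _).
      rewrite /dl; case: (eqVneq n N1) => [->|hn] /=; last by rewrite addr0.
      case: (eqVneq i a') => [->|hi'] /=; first by rewrite ltnn ltnSn add0r.
      have -> : (i < a'.+1)%N = (i < a')%N by rewrite ltnS leq_eqVlt (negbTE hi').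
      by rewrite addr0.
    apply: ImA_ext IHa _ => n i hi.
    by rewrite (leq_trans hi ha) (leq_trans hi (leqW ha)).
  apply: ImA_ext (inner a) _ => n i hi.
  rewrite hi andbT; case: (eqVneq n N1) => [->|hn] /=; first by rewrite ltnn ltnSn add0r.
  have -> : (n < N1.+1)%N = (n < N1)%N by rewrite ltnS leq_eqVlt (negbTE hn).
  by rewrite addr0.
apply: ImA_ext (key N) _ => n i _; case: ltnP => // h; by rewrite hN.
Qed.

Lemma choose_gs G : (forall g, List.In g G -> NN g) ->
  exists gs : seq (nat -> K -> M), size gs = size G /\
  forall j, (j < size G)%N -> grelt (nth (fun _ _ => 0) gs j) /\
     cong (nth (szero PS) G j) (nth (fun _ _ => 0) gs j).
Proof.
elim: G => [|g G IH] hG; first by exists [::].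
have [gs [sz hgs]] := IH (fun g' h => hG g' (or_intror h)).
have [_ [Phi [gP cP]]] := hG g (or_introl erefl).
exists (Phi :: gs); split; first by rewrite /= sz.
by move=> [|j] //= hj; apply: hgs.
Qed.

Lemma rees0 : is_rees I (fun _ => 0).
Proof. by split; [move=> n; apply: ipow0|exists 0%N]. Qed.
Lemma reesD s s' : is_rees I s -> is_rees I s' -> is_rees I (fun n => s n + s' n).
Proof.
move=> [h1 [N hN]] [h1' [N' hN']]; split; first by move=> n; apply: ipowD.
by exists (maxn N N') => n; rewrite geq_max => /andP [a1 a2]; rewrite hN // hN' // addr0.
Qed.
Lemma reesN s : is_rees I s -> is_rees I (fun n => - s n).
Proof.
move=> [h1 [N hN]]; split; first by move=> n; apply: ipowN.
by exists N => n hn; rewrite hN // oppr0.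
Qed.
Lemma reesZ r s : is_rees I s -> is_rees I (fun n => r * s n).
Proof.
move=> [h1 [N hN]]; split; first by move=> n; apply: ipowMl.
by exists N => n hn; rewrite hN // mulr0.
Qed.
Lemma reesX x s : I x -> is_rees I s -> is_rees I (xsh x s).
Proof.
move=> hx [h1 [N hN]]; split.
  by move=> [|n] //=; rewrite mulrC; apply: ipowMI.
by exists N.+1 => [[|n]] //= hn; rewrite hN // mulr0.
Qed.
Lemma rees_e0 : is_rees I (e0 R).
Proof. split; first by case=> [|n] //; have -> : e0 R n.+1 = 0 by []; apply: ipow0. by exists 1%N => [[|n]]. Qed.

Definition qlin n (h : K -> M) := forall r k1 k2, Q n (h (r *: k1 + k2) - (r *: h k1 + h k2)).

Lemma qlin0 n : qlin n (fun _ => 0).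
Proof. by move=> r k1 k2; rewrite scaler0 !addr0 subrr. Qed.
Lemma qlinD n h h' : qlin n h -> qlin n h' -> qlin n (fun k => h k + h' k).
Proof. by move=> q q' r k1 k2; rewrite L2 L1; apply: HQA. Qed.
Lemma qlinN n h : qlin n h -> qlin n (fun k => - h k).
Proof. by move=> q r k1 k2; rewrite L3; apply: HQN. Qed.
Lemma qlinB n h h' : qlin n h -> qlin n h' -> qlin n (fun k => h k - h' k).
Proof. by move=> q q'; apply: qlinD => //; apply: qlinN. Qed.
Lemma qlinM m n s h : ipow I m s -> qlin n h -> qlin (n + m) (fun k => s *: h k).
Proof. by move=> hs q r k1 k2; rewrite L4; apply: HQM. Qed.
Lemma qlin_sum n (T : Type) (l : seq T) (P : pred T) (F : T -> K -> M) :
  (forall j, qlin n (F j)) -> qlin n (fun k => \sum_(j <- l | P j) F j k).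
Proof.
move=> hF; elim: l => [|j l IH].
  by move=> r k1 k2; rewrite !big_nil scaler0 !addr0 subrr.
move=> r k1 k2; rewrite !big_cons; case: (P j); last by apply: IH.
by apply: (qlinD (hF j) IH).
Qed.

Lemma qlin_h0 n h : qlin n h -> Q n (h 0).
Proof.
move=> q; have := q 1 0 0; rewrite scaler0 addr0 scale1r => hq.
by rewrite -[h 0](addrK (h 0)) -opprB; apply: HQN.
Qed.

Lemma qlin_ext n h : qlin n h -> (forall i, (i < a)%N -> Q n (h (nth 0 ks i))) ->
  forall k, Q n (h k).
Proof.
move=> q hg k; have [cs ->] := hks k.
have : forall g, List.In g ks -> Q n (h g).
  by move=> g /(In_nth 0) [i [hi <-]]; apply: hg.
elim: ks cs => [|g l IH] [|c cs] hl; rewrite /= ?big_nil ?big_cons; try exact: qlin_h0.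
have := q c g (\sum_(p <- zip cs l) p.1 *: p.2) => hq.
rewrite -(subrK (c *: h g + h (\sum_(p <- zip cs l) p.1 *: p.2)) (h _)).
apply: HQA => //; apply: HQA; first by apply: HQS; apply: hl; left.
by apply: IH => g' h'; apply: hl; right.
Qed.

Lemma zip_mkseq (A B : Type) (V : zmodType) (F : A -> B -> V) (c : nat -> A) (l : seq B) x0 :
  \sum_(p <- zip (mkseq c (size l)) l) F p.1 p.2 = \sum_(j < size l) F (c j) (nth x0 l j).
Proof.
elim: l c => [|b l IH] c; first by rewrite big_nil big_ord0.
rewrite /= /mkseq /= -[1%N]/(1 + 0)%N iotaDl -map_comp big_cons big_ord_recl /=.
by rewrite (IH (fun j => c j.+1)).
Qed.

Section Gs.
Variable gs : seq (nat -> K -> M).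
Hypothesis gs_gr : forall j, (j < size gs)%N -> grelt (nth (fun _ _ => 0) gs j).
Local Notation Gj j := (nth (fun _ _ => 0) gs j).

Definition combf (c : nat -> nat -> R) n k :=
  \sum_(j < size gs) gr_act (c j) (Gj j) n k.

Lemma combf_qlin c n : (forall j, is_rees I (c j)) -> qlin n (combf c n).
Proof.
move=> hc; apply: qlin_sum => j; apply: qlin_sum => i.
have hin : (i <= n)%N by rewrite -ltnS.
have hq : qlin (i + (n - i)) (fun k => c j (n - i)%N *: Gj j i k).
  apply: qlinM; first by have [h _] := hc j; apply: h.
  by move=> r k1 k2; apply: grelt_L; apply: gs_gr.
by rewrite subnKC in hq.
Qed.

Definition CC (p : car PS) := exists c, (forall j, is_rees I (c j)) /\
  forall n i, (i < a)%N -> Q n (piP p n i - combf c n (nth 0 ks i)).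

Lemma CC_closed : closed CC.
Proof.
split; [|split; [|split; [|split]]].
- exists (fun _ _ => 0); split=> [j|n i hi]; first exact: rees0.
  rewrite pi_zero /combf big1 ?subrr // => j _; exact: gr_act0.
- move=> p q [c [hc Hc]] [c' [hc' Hc']]; exists (fun j n => c j n + c' j n); split.
    by move=> j; apply: reesD.
  move=> n i hi; rewrite pi_add /combf.
  under eq_bigr do rewrite gr_actD.
  by rewrite big_split /= L1; apply: HQA; [apply: Hc|apply: Hc'].
- move=> p [c [hc Hc]]; exists (fun j n => - c j n); split; first by move=> j; apply: reesN.
  move=> n i hi; rewrite pi_opp /combf.
  under eq_bigr do rewrite gr_actN.
  by rewrite sumrN -opprD; apply: HQN; apply: Hc.
- move=> r p [c [hc Hc]]; exists (fun j n => r * c j n); split; first by move=> j; apply: reesZ.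
  move=> n i hi; rewrite pi_scal /combf.
  under eq_bigr do rewrite gr_actZ.
  by rewrite -scaler_sumr -scalerBr; apply: HQS; apply: Hc.
- move=> op p hop [c [hc Hc]].
  have [x [hx Hx]] := @pi_ops1 R M ms a xs op hop.
  exists (fun j => xsh x (c j)); split; first by move=> j; apply: reesX => //; apply: xs_I.
  move=> n i hi; rewrite Hx /combf.
  under eq_bigr do rewrite gr_act_xsh.
  case: n => [|n] /=; first by rewrite big1 ?subrr.
  by rewrite -scaler_sumr -scalerBr; apply: HQx; [apply: xs_I|apply: Hc].
Qed.

End Gs.

Lemma CC_gen gs G : size gs = size G ->
  (forall j, (j < size G)%N -> grelt (nth (fun _ _ => 0) gs j) /\
     cong (nth (szero PS) G j) (nth (fun _ _ => 0) gs j)) ->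
  forall g, List.In g G -> CC gs g.
Proof.
move=> sz hgs g /(In_nth (szero PS)) [j [hj <-]].
have hj' : (j < size gs)%N by rewrite sz.
exists (fun j' => if j' == j then e0 R else (fun _ => 0)); split.
  by move=> j'; case: ifP => _; [apply: rees_e0|apply: rees0].
move=> n i hi; rewrite /combf (bigD1 (Ordinal hj')) //= eqxx gr_act_e0.
rewrite big1 ?addr0; first by have [_ h] := hgs j hj; apply: h.
move=> j' hne; have -> : (nat_of_ord j' == j) = false.
  by apply/negbTE; move: hne; rewrite -val_eqE.
by rewrite gr_act0.
Qed.

Theorem fg_main (L : lmodType R) (f : K -> L) :
  noetherian R -> fg_graded f Pm Q (is_rees I).
Proof.
move=> hR.
have [G [GN GS]] := @noeth_pstr R (a * size ms)%N (size xs) hR NN NN_closed (fun x h => proj1 h).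
have [gs [sz hgs]] := choose_gs GN.
have gs_gr : forall j, (j < size gs)%N -> grelt (nth (fun _ _ => 0) gs j).
  by move=> j hj; have [h _] := hgs j (eq_ind _ (fun z => (j < z)%N) hj _ sz).
exists gs; split.
  by move=> g /(In_nth (fun _ _ => 0)) [j [hj <-]]; apply: gs_gr.
move=> Phi gP; have [p [up hp]] := surj gP.
have Np : NN p.
  split=> //; exists Phi; split=> // n i hi; rewrite hp // subrr; exact: HQ0.
have [c [hc Hc]] := GS p Np (CC gs) (CC_closed gs) (CC_gen sz hgs).
exists (mkseq c (size gs)); split.
  by move=> c' hc'; have [j [<- _]] := in_map_iff' hc'; apply: hc.
move=> n; exists (fun _ _ => 0); split.
  split; first by move=> k j; apply: Pm0.
  split; first by move=> k; exists [::].
  by move=> r k1 k2 j; rewrite scaler0 !addr0 subrr.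
move=> k j; rewrite subr0 /gr_comb (zip_mkseq (fun s Phi => gr_act s Phi n k) c gs (fun _ _ => 0)).
pose h := fun k => Phi n k - combf gs c n k.
have : Q n (h k); last by [].
apply: qlin_ext.
  by apply: qlinB; [move=> r k1 k2; apply: grelt_L|apply: combf_qlin].
by move=> i hi; rewrite /h -hp //; apply: Hc.
Qed.

Lemma seq_bound (js : seq nat) : exists B, forall j, (B <= j)%N -> j \notin js.
Proof.
elim: js => [|x js [B hB]]; first by exists 0%N.
exists (maxn x.+1 B) => j; rewrite geq_max => /andP [h1 h2].
by rewrite inE negb_or hB // andbT; apply/eqP => e; move: h1; rewrite e ltnn.
Qed.

Theorem comm_main (L : lmodType R) (f : K -> L) : F_commutes_sum f Pm Q.
Proof.
split.
  move=> Phi Phi' gP gP'; split => [H|[psi [[hP [hF hL]] hrel]]]; last first.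
    move=> n; exists (fun l _ => psi l n); split.
      split; first by move=> l _; apply: hP.
      split; first by move=> l; exists [:: tt] => [[]].
      by move=> r k1 k2 _; apply: hL.
    by move=> k _; apply: hrel.
  pose psi := fun n => proj1_sig (constructive_indefinite_description _ (H n)).
  have hpsi : forall n, is_hom1 (Pm n) (Q n) (fun l => psi n l tt) /\
      forall k, Q n (Phi n k - Phi' n k - psi n (f k) tt).
    move=> n; have [[h1 [h2 h3]] h4] := proj2_sig (constructive_indefinite_description _ (H n)).
    split; last by move=> k; apply: (h4 k tt).
    split; first by move=> l _; apply: h1.
    split; first by move=> l; exists [:: tt] => [[]].
    by move=> r k1 k2 _; apply: h3.
  have [N hN] := grelt_bound gP; have [N' hN'] := grelt_bound gP'.
  pose B := maxn N N'.
  exists (fun l j => if (j < B)%N then psi j l tt else 0); split.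
    split; first by move=> l j; case: ifP => _; [have [[h _] _] := hpsi j; apply: (h l tt)|apply: Pm0].
    split.
      move=> l; exists (iota 0 B) => j; rewrite mem_iota /= add0n.
      by move=> /negbTE ->.
    move=> r k1 k2 j; case: ifP => _; last by rewrite scaler0 !addr0 subrr.
    by have [[_ [_ h]] _] := hpsi j; apply: (h r k1 k2 tt).
  move=> k j /=; case: ifP => hj; first by have [_ h] := hpsi j; apply: h.
  move/negbT: hj; rewrite -leqNgt geq_max => /andP [h1 h2].
  by rewrite hN // hN' // !subrr.
move=> phi [hP [hF hL]].
have [B hB] : exists B, forall k, List.In k ks -> forall n, (B <= n)%N -> phi k n = 0.
  suff gen : forall l : seq K, exists B, forall k, List.In k l -> forall n, (B <= n)%N -> phi k n = 0 by [].
  elim=> [|k l [B hB]]; first by exists 0%N.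
  have [js hjs] := hF k; have [B' hB'] := seq_bound js.
  exists (maxn B B') => k' [<-|hk'] n; rewrite geq_max => /andP [h1 h2].
    by apply: hjs; apply: hB'.
  by apply: hB.
exists (fun n k => if (n < B)%N then phi k n else 0); split.
  apply: grelt_intro.
  - by move=> n k; case: ifP => _; [apply: hP|apply: Pm0].
  - move=> n r k1 k2; case: ifP => _; last by rewrite scaler0 !addr0 subrr.
    by apply: hL.
  - by exists B => n hn k; rewrite ltnNge hn.
exists (fun _ _ => 0); split.
  split; first by move=> l j; apply: Pm0.
  split; first by move=> l; exists [::].
  by move=> r k1 k2 j; rewrite scaler0 !addr0 subrr.
move=> k j /=; rewrite subr0; case: ifP => hj; first by rewrite subrr.
rewrite subr0; move/negbT: hj; rewrite -leqNgt => hj.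
apply: (qlin_ext (h := fun k => phi k j)).
  by move=> r k1 k2; apply: hL.
move=> i hi; have -> : phi (nth 0 ks i) j = 0 by apply: hB => //; exact: nth_In.
exact: HQ0.
Qed.

End Main.

Unset Implicit Arguments.
Local Open Scope ring_scope.

Theorem corollary2p14 (R : comPzRingType) (K L M : lmodType R) (f : {linear K -> L})
    (M' : M -> Prop) (I : R -> Prop) :
  noetherian R -> fg_mod K -> fg_mod L -> fg_mod M ->
  is_submod M' -> is_ideal I ->
  (* (a), (c):  F((+)_n I^nM/I^nM') = (+)_n F(I^nM/I^nM'), f.g. over S *)
  (F_commutes_sum f (IpowM I (fun _ : M => True)) (IpowM I M') /\
   fg_graded f (IpowM I (fun _ : M => True)) (IpowM I M') (is_rees I)) /\
  (* (b), (c):  F((+)_n I^nM/I^(n+1)M) = (+)_n F(I^nM/I^(n+1)M), f.g. over gr(I) *)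
  (F_commutes_sum f (IpowM I (fun _ : M => True)) (fun n => IpowM I (fun _ : M => True) n.+1) /\
   fg_graded f (IpowM I (fun _ : M => True)) (fun n => IpowM I (fun _ : M => True) n.+1)
     (is_gr_rep I)).
Proof.
move=> hR [ks hks] _ [ms hms] _ hI.
have [xs hxs] := hR I hI.
have Q0 : forall (N : M -> Prop) n, IpowM I N n 0 by move=> N n; apply: ps0.
have QA : forall (N : M -> Prop) n x y, IpowM I N n x -> IpowM I N n y -> IpowM I N n (x + y).
  by move=> N n x y; apply: psD.
have QS : forall (N : M -> Prop) n r x, IpowM I N n x -> IpowM I N n (r *: x).
  by move=> N n r x; apply: IpowM_scal.
have QM : forall (N : M -> Prop) m n s x, ipow I m s -> IpowM I N n x -> IpowM I N (n + m) (s *: x).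
  by move=> N m n s x; apply: IpowM_mul.
split; split.
- exact: (comm_main I (Q0 M') (QA M') (QS M') hks).
- exact: (fg_main (Q0 M') (QA M') (QS M') (QM M') hks hms hxs).
- exact: (comm_main I (fun n => Q0 _ n.+1) (fun n => QA _ n.+1) (fun n => QS _ n.+1) hks).
- apply: (fg_main (fun n => Q0 _ n.+1) (fun n => QA _ n.+1) (fun n => QS _ n.+1) _ hks hms hxs) => //.
  by move=> m n s x hs hx; rewrite -addSn; apply: QM.
Qed.
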